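(* For every graph $G$ on $[n]$ and every $k=2,3,\dots,n-2$, the polynomial $$\theta_k=\sum_{ij\in G}s_{ij}\sum_{\ell=0}^{k}x_i^{k-\ell}x_j^{\ell}$$ vanishes on the scattering correspondence $\mathcal V_G$.
   Context: $G$ is a simple graph on $[n]$, and $G_i$ denotes the set of neighbours of vertex $i$. The variables are $s_{ij}$ ($ij\in G$) and $x_1,\dots,x_n$. $\mathcal K_G$ is defined by $\sum_{j\in G_i}s_{ij}=0$ for $i\in[n]$. $\mathcal H$ is the union of the hyperplanes $x_i=x_j$ for $i<j$. The scattering correspondence is $$\mathcal V_G=\{(s,x)\in\mathbb P^{|G|-1}\times(\mathbb P^{n-1}\setminus\mathcal H): s\in\mathcal K_G,\ \textstyle\sum_{j\in G_i}s_{ij}/(x_i-x_j)=0\ \text{for all } i\in[n]\}.$$ *)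

(* Defs.v *)
From HB Require Import structures.
From mathcomp Require Import all_boot all_order all_algebra.
From mathcomp Require Import reals.
From mathcomp Require Import complex.
Set Implicit Arguments. Unset Strict Implicit. Unset Printing Implicit Defensive.
Import Order.TTheory GRing.Theory Num.Theory.
Local Open Scope ring_scope.

Definition simple_graph (n : nat) (G : rel 'I_n) : Prop :=
  symmetric G /\ irreflexive G.

(* Edge variables s_ij : represented by a symmetric function; only the
   values on edges ij \in G are used. *)
Definition edge_sym (n : nat) (F : Type) (s : 'I_n -> 'I_n -> F) : Prop :=
  forall i j, s i j = s j i.

(* The point s of P^{|G|-1} : not all edge coordinates vanish. *)
Definition edge_nonzero (F : nmodType) (n : nat) (G : rel 'I_n)
  (s : 'I_n -> 'I_n -> F) : Prop :=
  exists i j, G i j /\ s i j != 0.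

Definition in_KG (F : nmodType) (n : nat) (G : rel 'I_n)
  (s : 'I_n -> 'I_n -> F) : Prop :=
  forall i, \sum_(j | G i j) s i j = 0.

(* x \in P^{n-1} \ H : x nonzero with pairwise distinct coordinates. *)
Definition off_H (F : nmodType) (n : nat) (x : 'I_n -> F) : Prop :=
  (exists i, x i != 0) /\ injective x.

Definition scattering_eqs (F : fieldType) (n : nat) (G : rel 'I_n)
  (s : 'I_n -> 'I_n -> F) (x : 'I_n -> F) : Prop :=
  forall i, \sum_(j | G i j) s i j / (x i - x j) = 0.

Definition in_VG (F : fieldType) (n : nat) (G : rel 'I_n)
  (s : 'I_n -> 'I_n -> F) (x : 'I_n -> F) : Prop :=
  [/\ edge_nonzero G s, in_KG G s, off_H x & scattering_eqs G s x].

(* theta_k = sum_{ij in G} s_ij sum_{l=0}^k x_i^{k-l} x_j^l, each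
   unordered edge counted once (i < j). *)
Definition theta (F : comNzRingType) (n : nat) (G : rel 'I_n) (k : nat)
  (s : 'I_n -> 'I_n -> F) (x : 'I_n -> F) : F :=
  \sum_(i < n) \sum_(j < n | (i < j)%N && G i j)
     s i j * \sum_(l < k.+1) x i ^+ (k - l) * x j ^+ l.

(* Main.v *)
Require Import Defs.
From HB Require Import structures.
From mathcomp Require Import all_boot all_order all_algebra.
From mathcomp Require Import reals.
From mathcomp Require Import complex.
Import Order.TTheory GRing.Theory Num.Theory.
Local Open Scope ring_scope.

Lemma theta_gen (F : fieldType) (n : nat) (G : rel 'I_n) (k : nat)
  (s : 'I_n -> 'I_n -> F) (x : 'I_n -> F) :
  simple_graph G -> edge_sym s -> injective x -> scattering_eqs G s x ->
  theta G k s x = 0.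
Proof.
move=> [Gsym Girr] ssym xinj sc.
pose Fi i j := s i j * x i ^+ k.+1 / (x i - x j).
have neq i j : G i j -> x i - x j != 0.
  move=> Gij; rewrite subr_eq0; apply/eqP=> /xinj eij.
  by move: Gij; rewrite eij Girr.
have S0 : \sum_i \sum_j (if G i j then Fi i j else 0) = 0.
  rewrite big1 // => i _; rewrite -big_mkcond /=.
  transitivity (x i ^+ k.+1 * \sum_(j | G i j) s i j / (x i - x j));
    last by rewrite sc mulr0.
  rewrite mulr_sumr.
  apply: eq_bigr => j _.
  by rewrite /Fi mulrCA mulrA.
have S1 : \sum_i \sum_j (if G i j then Fi i j else 0) =
  \sum_(i < n) \sum_(j < n) (if (i < j)%N && G i j then Fi i j else 0) +
  \sum_(i < n) \sum_(j < n) (if (i < j)%N && G i j then Fi j i else 0).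
  rewrite [X in _ + X]exchange_big -big_split /=. apply: eq_bigr => i _.
  rewrite -big_split /=; apply: eq_bigr => j _.
  case: (ltngtP i j) => [lt|gt|eq].
  - by rewrite /= addr0; case: (G j i).
  - by rewrite /= add0r (Gsym i j).
  - have eij : i = j by apply: val_inj.
    rewrite -eij.
    by rewrite Girr /= addr0.
rewrite S1 -big_split /= in S0; rewrite -S0 /theta; apply: eq_bigr => i _.
rewrite -big_split /= big_mkcond /=; apply: eq_bigr => j _.
case: andP => [[_ Gij]|_]; last by rewrite addr0.
rewrite /Fi.
have hi := neq i j Gij.
have hj : x j - x i != 0 by rewrite -opprB oppr_eq0.
rewrite (ssym j i).
rewrite -[x j - x i]opprB invrN mulrN -!mulrA -mulrBr -mulrBl subrXX /=.
by rewrite mulrAC mulfV // mul1r.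
Qed.

Theorem mainTheorem5 (R : realType) (n : nat) (G : rel 'I_n) (k : nat)
  (s : 'I_n -> 'I_n -> R[i]) (x : 'I_n -> R[i]) :
  simple_graph G -> (2 <= k)%N -> (k <= n - 2)%N ->
  edge_sym s -> in_VG G s x ->
  theta G k s x = 0.
Proof.
move=> sg _ _ es [_ _ [_ xi] sc]; exact: theta_gen.
Qed.
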